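(* Let $s\in(0,1)$. Given two arbitrary constants $C_1,C_2>0$, there exists a function $G:\mathbb{R}\to[0,+\infty)$ such that: (1) $G$ is compactly supported; (2) $G(x)\le C_1$ for all $x\in\mathbb{R}$; (3) $(-\Delta)^sG(x)\le -C_2|x|^{-(1+2s)}$ for all $x\in\mathbb{R}$ with $\mathrm{dist}(x,\mathrm{supp}(G))\ge1$.
   Context: $(-\Delta)^sw(x)=\sigma_s\,\mathrm{P.V.}\int_{\mathbb{R}}\frac{w(x)-w(y)}{|x-y|^{1+2s}}dy$ with $\sigma_s>0$ the standard normalization constant. *)

(* Defs.v *)
From HB Require Import structures.
From mathcomp Require Import all_boot all_order all_algebra.
From mathcomp Require Import all_classical all_reals all_analysis.
Set Implicit Arguments. Unset Strict Implicit. Unset Printing Implicit Defensive.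
Import Order.TTheory GRing.Theory Num.Theory.
Import numFieldNormedType.Exports.
Local Open Scope classical_set_scope.
Local Open Scope ring_scope.

Definition Gamma_fn {R : realType} (t : R) : R :=
  Rintegral (@lebesgue_measure R) `]0, +oo[%classic
    (fun x => x `^ (t - 1) * expR (- x)).

(* Standard normalisation constant of (-Delta)^s in dimension 1:
   sigma_s = s 4^s Gamma(1/2 + s) / (sqrt(pi) Gamma(1 - s)) *)
Definition sigma_s {R : realType} (s : R) : R :=
  s * 4 `^ s * Gamma_fn (2^-1 + s) / (Num.sqrt pi * Gamma_fn (1 - s)).

Definition fl_kernel {R : realType} (s : R) (w : R -> R) (x y : R) : R :=
  (w x - w y) / `|x - y| `^ (1 + 2 * s).

Definition frac_lap_eps {R : realType} (s : R) (w : R -> R) (x eps : R) : R :=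
  sigma_s s * Rintegral (@lebesgue_measure R) [set y | eps < `|x - y|]
                        (fl_kernel s w x).

(* (-Delta)^s w (x) exists as a principal value and equals L:
   each truncated integral is a genuine Lebesgue integral and they
   converge to L as eps -> 0+. *)
Definition frac_lap_is {R : realType} (s : R) (w : R -> R) (x L : R) : Prop :=
  (forall eps : R, 0 < eps ->
     (@lebesgue_measure R).-integrable [set y | eps < `|x - y|]
        (fun y => (fl_kernel s w x y)%:E)) /\
  (frac_lap_eps s w x eps @[eps --> 0^'+] --> L).

Definition supp {R : realType} (w : R -> R) : set R :=
  closure [set x | w x != 0].

(* Main.v *)
Require Import Defs.
From HB Require Import structures.
From mathcomp Require Import all_boot all_order all_algebra.
From mathcomp Require Import all_classical all_reals all_analysis.
From mathcomp Require Import measurable_realfun.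
From mathcomp Require Import ring lra.
Import Order.TTheory GRing.Theory Num.Theory.
Import numFieldNormedType.Exports.
Local Open Scope classical_set_scope.
Local Open Scope ring_scope.

Section Aux.
Context {R : realType}.
Local Notation mu := (@lebesgue_measure R).

Lemma powR_cont_pos (t x : R) : 0 < x -> {for x, continuous (fun y : R => y `^ t)}.
Proof.
move=> x0; apply: differentiable_continuous; apply/derivable1_diffP.
by apply: derivable_powR; rewrite in_itv/= x0.
Qed.

Lemma ftc_pow (t a : R) : 0 < t -> 0 < a -> a < 1 ->
  (\int[mu]_(x in `[a, 1%R]) (x `^ (t - 1))%:E =
     (1 `^ t / t)%:E - (a `^ t / t)%:E)%E.
Proof.
move=> t0 a0 a1.
apply: (@continuous_FTC2 _ _ (fun x => x `^ t / t)) => //.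
- apply: continuous_in_subspaceT => x; rewrite inE/= in_itv/= => /andP[ax _].
  exact: powR_cont_pos (lt_le_trans a0 ax).
- split.
  + move=> x; rewrite in_itv/= => /andP[ax _].
    apply: derivableM; last exact: derivable_cst.
    by apply: derivable_powR; rewrite in_itv/= (lt_trans a0 ax).
  + apply: cvg_at_right_filter; apply: cvgM; last exact: cvg_cst.
    exact: powR_cont_pos.
  + apply: cvg_at_left_filter; apply: cvgM; last exact: cvg_cst.
    exact: powR_cont_pos.
- move=> x; rewrite in_itv/= => /andP[ax _].
  have x0 : 0 < x := lt_trans a0 ax.
  rewrite derive1Mr; last by apply: derivable_powR; rewrite in_itv/= x0.
  rewrite powR_derive1 ?in_itv/= ?x0//.
  by rewrite mulrAC divff ?gt_eqF// mul1r.
Qed.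

Lemma int_pow01 (t : R) : 0 < t ->
  (\int[mu]_(x in `]0%R, 1%R]) (x `^ (t - 1))%:E <= (t^-1)%:E)%E.
Proof.
move=> t0.
pose a (n : nat) : R := (n.+2%:R)^-1.
have a0 n : 0 < a n by rewrite /a invr_gt0 ltr0n.
have a1 n : a n < 1 by rewrite /a invf_lt1 ?ltr0n// ltr1n.
have and n m : (n <= m)%N -> a m <= a n.
  by move=> nm; rewrite /a lef_pV2 ?posrE ?ltr0n// ler_nat ltnS ltnS.
pose f : R -> R := (fun y : R => y `^ (t - 1)).
pose g : nat -> R -> \bar R := (fun n x => ((f \_ `[a n, 1%R]) x)%:E).
pose D := (`]0%R, 1%R]%classic : set R).
have mD : measurable D by exact: measurable_itv.
have mg n : measurable_fun D (g n).
  apply: measurableT_comp => //; apply: measurable_funTS.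
  apply/(measurable_restrictT _ _).1 => //.
  exact: measurable_funTS (measurable_powR _).
have g0 n x : D x -> (0 <= g n x)%E.
  move=> _; rewrite /g patchE lee_fin; case: ifP => // _; exact: powR_ge0.
have ndg x : D x -> {homo g^~ x : n m / (n <= m)%N >-> (n <= m)%E}.
  move=> _ n m nm; rewrite /g !patchE lee_fin.
  case: ifPn => [|_]; last by case: ifP => // _; exact: powR_ge0.
  rewrite !inE/= !in_itv/= => /andP[anx x1].
  by rewrite ifT// inE/= in_itv/= (le_trans (and _ _ nm) anx) x1.
have -> : (\int[mu]_(x in `]0%R, 1%R]) (x `^ (t - 1))%:E =
    \int[mu]_(x in D) (fun x => limn (g^~ x)) x)%E.
  apply: eq_integral => x; rewrite inE/= in_itv/= => /andP[x0 x1].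
  apply/esym/lim_near_cst => //.
  have [n _ Hn] := near_infty_natSinv_lt (PosNum x0).
  exists n => // m /= nm; rewrite /g patchE ifT// inE/= in_itv/= x1 andbT.
  apply: ltW; apply: le_lt_trans (Hn m nm).
  by rewrite /a lef_pV2 ?posrE ?ltr0n// ler_nat.
have -> := (monotone_convergence mu mD mg g0 ndg).
apply: lime_le.
  apply: ereal_nondecreasing_is_cvgn => n m nm.
  apply: ge0_le_integral => //.
  - by move=> x Dx; exact: g0.
  - exact: mg.
  - exact: mg.
  - by move=> x Dx; exact: (ndg x Dx n m nm).
apply: nearW => n.
rewrite integral_mkcond.
have -> : (g n) \_ D = (fun x => (f x)%:E) \_ `[a n, 1%R].
  apply/funext => x; rewrite /g !patchE.
  case: ifPn => [|]; first by case: ifPn.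
  case: ifPn => //; rewrite !inE/= !in_itv/= => /andP[anx x1].
  by rewrite notin_setE /D/= in_itv/= (lt_le_trans (a0 n) anx) x1.
rewrite -integral_mkcond ftc_pow// powR1 -EFinB lee_fin.
by rewrite div1r gerBl divr_ge0 ?powR_ge0 ?ltW.
Qed.

Lemma meas_gint (t : R) :
  measurable_fun setT (fun x : R => x `^ (t - 1) * expR (- x)).
Proof.
apply: measurable_funM; first exact: measurable_powR.
by apply: measurableT_comp; [exact: measurable_expR|exact: oppr_measurable].
Qed.

Lemma xexp_le (x : R) : 0 <= x -> x * expR (- x) <= 2 * expR (- (2^-1) * x).
Proof.
move=> x0.
have -> : - x = - (2^-1) * x + - (2^-1) * x by field.
rewrite expRD mulrA ler_wpM2r ?expR_ge0//.
rewrite mulNr expRN ler_pdivrMr ?expR_gt0//.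
apply: le_trans (_ : 2 * (1 + 2^-1 * x) <= _); last first.
  by rewrite ler_wpM2l// expR_ge1Dx.
by rewrite mulrDr mulr1 mulrA divff// mul1r lerDr.
Qed.

Lemma gamma_fin (t : R) : 0 < t -> t <= 2 ->
  (\int[mu]_(x in `]0%R, +oo[) (x `^ (t - 1) * expR (- x))%:E < +oo)%E.
Proof.
move=> t0 t2.
set h := (fun x : R => x `^ (t - 1) * expR (- x)).
have h0 x : (0 <= (h x)%:E)%E by rewrite lee_fin mulr_ge0 ?powR_ge0 ?expR_ge0.
rewrite (@itv_bndbnd_setU _ _ _ (BRight 1%R)) //.
rewrite ge0_integral_setU //=; last first.
- apply/eqP/seteqP; split => // x [] /=; rewrite !in_itv/= => /andP[_ x1] /andP[+ _].
  by rewrite ltNge x1.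
- by move=> *; exact: h0.
- by apply: measurableT_comp => //; apply: measurable_funTS; exact: meas_gint.
2: by rewrite bnd_simp.
apply: lte_add_pinfty.
- apply: (@le_lt_trans _ _ (t^-1)%:E); last exact: ltry.
  apply: (le_trans _ (int_pow01 t t0)).
  apply: ge0_le_integral => //.
  + by move=> *; exact: h0.
  + by apply: measurableT_comp => //; apply: measurable_funTS; exact: meas_gint.
  + apply: measurableT_comp => //; apply: measurable_funTS; exact: measurable_powR.
  + move=> x; rewrite /= in_itv/= => /andP[x0 _].
    by rewrite lee_fin ler_piMr ?powR_ge0// expR_le1 oppr_le0 ltW.
have mp : measurable_fun setT (exponential_pdf (2^-1 : R)).
  exact: measurable_exponential_pdf.
have H : (\int[mu]_(x in `]1%R, +oo[) (h x)%:E <=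
   \int[mu]_(x in [set: R]) (4 * exponential_pdf (2^-1) x)%:E)%E; last first.
  apply: le_lt_trans H _.
  under eq_integral do rewrite EFinM.
  rewrite ge0_integralZl//; last first.
  - by move=> x _; rewrite lee_fin exponential_pdf_ge0.
  - by apply: measurableT_comp => //.
  by rewrite integral_exponential_pdf// mule1 ltry.
have H2 : (\int[mu]_(x in `]1%R, +oo[) (4 * exponential_pdf (2^-1) x)%:E <=
   \int[mu]_(x in [set: R]) (4 * exponential_pdf (2^-1) x)%:E)%E.
  apply: ge0_subset_integral => //.
  + apply: measurableT_comp => //; apply: measurable_funM => //.
  + by move=> x _; rewrite lee_fin mulr_ge0// exponential_pdf_ge0.
apply: le_trans H2.
    apply: ge0_le_integral => //.
    + by apply: measurableT_comp => //; apply: measurable_funTS; exact: meas_gint.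
    + apply: measurableT_comp => //; apply: measurable_funTS.
      by apply: measurable_funM => //.
    + move=> x; rewrite /= in_itv/= andbT => x1.
      have x0 : 0 <= x by rewrite ltW// (lt_trans _ x1).
      rewrite lee_fin exponential_pdfE// mulrA.
      have -> : 4 * 2^-1 = 2 :> R by field.
      rewrite /h; apply: (le_trans _ (xexp_le x x0)); rewrite ler_wpM2r ?expR_ge0//.
      rewrite -[leRHS]powRr1// ler_powR ?(ltW x1)//.
      by rewrite lerBlDr; have := t2; rewrite -[2]/(1 + 1); lra.
Qed.

Lemma gamma_pos (t : R) : 0 < t -> t <= 2 -> 0 < Gamma_fn t.
Proof.
move=> t0 t2; rewrite /Gamma_fn /Rintegral; apply: fine_gt0.
apply/andP; split; last exact: gamma_fin.
set h := (fun x : R => x `^ (t - 1) * expR (- x)).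
have h0 x : (0 <= (h x)%:E)%E by rewrite lee_fin mulr_ge0 ?powR_ge0 ?expR_ge0.
set c : R := expR (-2) / 2.
have c0 : 0 < c by rewrite divr_gt0 ?expR_gt0.
apply: (@lt_le_trans _ _ c%:E); first by rewrite lte_fin.
have H1 : (\int[mu]_(x in `[1%R, 2%R]) (cst c%:E x) = c%:E)%E.
  rewrite integral_cst//= lebesgue_measure_itv/= lte_fin ltr1n -EFinD.
  by rewrite -EFinM -[2]/(1 + 1 : R) addrK mulr1.
rewrite -H1.
have H2 : (\int[mu]_(x in `[1%R, 2%R]) (h x)%:E <=
    \int[mu]_(x in `]0%R, +oo[) (h x)%:E)%E.
  apply: ge0_subset_integral => //.
  - by apply: measurableT_comp => //; apply: measurable_funTS; exact: meas_gint.
  - by move=> x; rewrite /= !in_itv/= andbT => /andP[x1 _]; rewrite (lt_le_trans _ x1).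
apply: le_trans H2.
apply: ge0_le_integral => //.
- by move=> x _; rewrite lee_fin ltW.
- by apply: measurableT_comp => //; apply: measurable_funTS; exact: meas_gint.
move=> x; rewrite /= in_itv/= => /andP[x1 x2].
have x0 : 0 < x by rewrite (lt_le_trans _ x1).
rewrite lee_fin /c /h mulrC; apply: ler_pM.
- by rewrite invr_ge0.
- exact: expR_ge0.
- apply: (@le_trans _ _ (x `^ (-1))).
    by rewrite (powR_inv1 (ltW x0)) lef_pV2 ?posrE.
  rewrite ler_powR//; lra.
- by rewrite ler_expR lerN2.
Qed.

Lemma sigma_pos (s : R) : 0 < s -> s < 1 -> 0 < sigma_s s.
Proof.
move=> s0 s1; rewrite /sigma_s.
apply: divr_gt0; last apply: mulr_gt0.
- rewrite mulr_gt0// ?mulr_gt0// ?powR_gt0// gamma_pos//.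
    by rewrite addr_gt0// invr_gt0.
  by have := s1; lra.
- by rewrite sqrtr_gt0 pi_gt0.
- by rewrite gamma_pos//; have := s1; lra.
Qed.

Lemma kmeas (x p : R) : measurable_fun setT (fun y : R => `|x - y| `^ p).
Proof.
have h1 : measurable_fun setT (fun y : R => x - y).
  exact: (measurable_funB (measurable_cst x) (@measurable_id _ _ setT)).
have h2 := measurableT_comp (@normr_measurable R setT) h1.
exact: (measurableT_comp (measurable_powR p) h2).
Qed.

End Aux.

Theorem mainTheorem12 (R : realType) (s : R) (hs0 : 0 < s) (hs1 : s < 1)
  (C1 C2 : R) (hC1 : 0 < C1) (hC2 : 0 < C2) :
  exists G : R -> R,
    (forall x, 0 <= G x) /\
    measurable_fun setT G /\
    compact (supp G) /\
    (forall x, G x <= C1) /\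
    (forall x, (forall y, supp G y -> 1 <= `|x - y|) ->
       exists L, frac_lap_is s G x L /\ L * `|x| `^ (1 + 2 * s) <= - C2).
Proof.
set sig := sigma_s s.
have sig0 : 0 < sig by exact: sigma_pos.
pose a : R := 4 * C2 / (sig * C1) + 1.
have a0 : 0 < a.
  apply: addr_gt0 => //; apply: divr_gt0; [exact: mulr_gt0 | exact: mulr_gt0 sig0 hC1].
pose I := (`[- a, a]%classic : set R).
have mI : measurable I by exact: measurable_itv.
pose G : R -> R := (fun=> C1) \_ I.
have GE y : G y = if y \in I then C1 else 0 by rewrite /G patchE.
have suppE : supp G = I.
  rewrite /supp.
  have -> : [set x | G x != 0] = I.
    apply/seteqP; split => y /=; rewrite GE.
      by case: ifPn => [/set_mem //|]; rewrite eqxx.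
    by move=> Iy; rewrite ifT ?inE// gt_eqF.
  by apply/esym/closure_id; exact: itv_closed.
exists G; split.
  by move=> y; rewrite GE; case: ifP => // _; exact: ltW.
split.
  by apply/(measurable_restrictT _ _).1 => //; exact: measurable_cst.
split; first by rewrite suppE; exact: segment_compact.
split; first by move=> y; rewrite GE; case: ifP => // _; exact: ltW.
move=> x; rewrite suppE => Hx.
pose p := 1 + 2 * s.
have p0 : 0 < p by rewrite /p; lra.
have xI : ~ I x.
  by move=> Ix; have := Hx x Ix; rewrite subrr normr0 ler10.
have xa : a < `|x|.
  rewrite ltNge; apply/negP => xa; apply: xI.
  by rewrite /I/= in_itv/= -ler_norml.
have Gx : G x = 0 by rewrite GE; case: ifPn => // /set_mem.
pose k : R -> R := fun y => - C1 * `|x - y| `^ (- p).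
have mk : measurable_fun setT k.
  exact: (measurable_funM (measurable_cst (- C1)) (kmeas x (- p))).
have muI : (lebesgue_measure I < +oo)%E.
  by rewrite /I lebesgue_measure_itv/= lte_fin; case: ifP => _; exact: ltry.
have kI : lebesgue_measure.-integrable I (EFin \o k).
  apply: measurable_bounded_integrable => //; first exact: measurable_funTS.
  rewrite /bounded_near; near=> M => y Iy /=.
  rewrite normrM normrN (gtr0_norm hC1) ger0_norm ?powR_ge0//.
  apply: (@le_trans _ _ C1); last by near: M; apply: nbhs_pinfty_ge; exact: gtr0_real.
  rewrite ler_piMr ?(ltW hC1)//.
  rewrite -(powRr0 `|x - y|) ler_powR ?Hx//; last by rewrite oppr_le0 ltW.
have kerE y : fl_kernel s G x y = (k \_ I) y.
  rewrite /fl_kernel Gx sub0r patchE GE /k.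
  case: ifP => _; last by rewrite oppr0 mul0r.
  by rewrite powRN.
have mE eps : measurable [set y : R | eps < `|x - y|].
  have h1 : measurable_fun setT (fun y : R => x - y).
    exact: (measurable_funB (measurable_cst x) (@measurable_id _ _ setT)).
  have h2 := measurableT_comp (@normr_measurable R setT) h1.
  have := h2 measurableT _ (measurable_itv `]eps, +oo[).
  rewrite setTI; congr measurable; apply/seteqP; split => y /=;
    by rewrite in_itv/= andbT.
exists (sig * Rintegral lebesgue_measure I k); split.
  split.
    move=> eps eps0.
    have H : lebesgue_measure.-integrable [set y : R | eps < `|x - y|] (EFin \o (k \_ I)).
      rewrite -restrict_EFin; apply: (integrableS measurableT) => //.
      exact: mE.
      exact: (@integrable_mkcond _ _ _ lebesgue_measure I (EFin \o k) (measurable_itv _)).1 kI.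
    eapply eq_integrable; [exact: mE| |exact: H].
    by move=> y _; rewrite /= kerE.
  apply: cvg_near_cst; near=> eps.
  rewrite /frac_lap_eps -/sig; congr (sig * _).
  rewrite Rintegral_mkcond [RHS]Rintegral_mkcond; congr Rintegral.
  apply/funext => y; rewrite !patchE.
  case: ifPn => yE; first by have := kerE y; rewrite /fl_kernel => ->; rewrite patchE.
  rewrite ifN//; apply/negP => /set_mem Iy; move/negP: yE; apply.
  rewrite inE/=; apply: lt_le_trans (Hx y Iy).
  by near: eps; apply: nbhs_right_lt.
rewrite -/p.
pose X := `|x|.
have X0 : 0 < X by rewrite /X (lt_trans a0 xa).
pose c := - C1 * (2 * X) `^ (- p).
have kle y : I y -> k y <= c.
  move=> Iy; rewrite /k /c !mulNr lerN2 ler_pM2l//.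
  have dy : 0 < `|x - y| by rewrite (lt_le_trans _ (Hx y Iy)).
  rewrite !powRN lef_pV2 ?posrE ?powR_gt0 ?mulr_gt0//.
  apply: ge0_ler_powR.
  - exact: ltW p0.
  - by rewrite nnegrE.
  - by rewrite nnegrE mulr_ge0// ltW.
  apply: (le_trans (ler_normB _ _)); rewrite -/X mulr2n mulrDl mul1r lerD2l.
  have : `|y| <= a by rewrite ler_norml; move: Iy; rewrite /I/= in_itv/=.
  by move/le_trans; apply; rewrite ltW.
have cI : lebesgue_measure.-integrable I (EFin \o cst c).
  apply: measurable_bounded_integrable => //; exact: bounded_cst.
have Hint : Rintegral lebesgue_measure I k <= c * (a + a).
  apply: (le_trans (@le_Rintegral _ _ _ lebesgue_measure I k (cst c) (measurable_itv _) kI cI kle)).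
  rewrite (@Rintegral_cst _ _ _ lebesgue_measure I (measurable_itv _)).
  have mI' : lebesgue_measure I = (a + a)%:E.
    rewrite /I lebesgue_measure_itv/= lte_fin.
    have -> : (- a < a) = true by apply/idP; move: a0 => ?; lra.
    by rewrite /= opprK.
  rewrite le_eqVlt; apply/orP; left; apply/eqP; congr (c * _); exact: (congr1 fine mI').
apply: (@le_trans _ _ (sig * (c * (a + a)) * X `^ p)).
  apply: ler_wpM2r; first exact: powR_ge0.
  apply: ler_wpM2l; first exact: ltW sig0.
  exact: Hint.
pose q := 2 `^ (- p).
have hq : 8^-1 <= q.
  rewrite /q powRN lef_pV2 ?posrE ?powR_gt0//.
  have -> : 8 = 2 `^ 3%:R :> R.
    by rewrite powR_mulrn// -natrX.
  by rewrite ler_powR ?ler1n//; rewrite /p; lra.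
have e : X `^ (- p) * X `^ p = 1 by rewrite powRN mulVf// gt_eqF// powR_gt0.
have -> : c = - C1 * (q * X `^ (- p)) by rewrite /c powRM// ltW.
have -> : sig * (- C1 * (q * X `^ (- p)) * (a + a)) * X `^ p =
    - (2 * q * (sig * C1 * a)) * (X `^ (- p) * X `^ p) by ring.
rewrite e mulr1.
have Pa : sig * C1 * a = 4 * C2 + sig * C1.
  rewrite /a; field.
  by rewrite (gt_eqF hC1) (gt_eqF sig0).
rewrite Pa.
have S0 : 0 < sig * C1 by exact: mulr_gt0.
have h8 : 0 <= (q - 8^-1) * (4 * C2 + sig * C1).
  by apply: mulr_ge0; [rewrite subr_ge0 | apply: ltW; apply: addr_gt0 => //; apply: mulr_gt0].
nra.
Unshelve. all: by end_near.
Qed.
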